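(* Let $A_0\subseteq A$ be a finite extension of $k$-algebras, i.e. $A$ is finitely generated both as a left and as a right $A_0$-module. Then a two-sided ideal $I$ of $A$ has finite $k$-codimension in $A$ if and only if there exists a two-sided ideal $I_0$ of $A_0$ of finite $k$-codimension in $A_0$ such that $I_0\subseteq I$.
   Context: $k$ is a field; algebras are unital associative $k$-algebras. *)

(* Defs.v *)
From HB Require Import structures.
From mathcomp Require Import all_boot all_order all_algebra.
Set Implicit Arguments. Unset Strict Implicit. Unset Printing Implicit Defensive.
Import GRing.Theory.
Local Open Scope ring_scope.

Section Defs.
Variables (k : fieldType) (A : algType k).

Definition is_subalgebra (S : A -> Prop) : Prop :=
  [/\ S 1,
      (forall x y, S x -> S y -> S (x + y)),
      (forall (c : k) x, S x -> S (c *: x)) &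
      (forall x y, S x -> S y -> S (x * y))].

(* I is a two-sided ideal of the subalgebra S (as a subset of A). For S = A
   this is an ordinary two-sided ideal of A. *)
Definition is_two_sided_ideal_in (S I : A -> Prop) : Prop :=
  [/\ (forall x, I x -> S x),
      I 0,
      (forall x y, I x -> I y -> I (x + y)),
      (forall a x, S a -> I x -> I (a * x)) &
      (forall a x, S a -> I x -> I (x * a))].

Definition fin_gen_left (S : A -> Prop) : Prop :=
  exists s : seq A, forall a : A, exists b : nat -> A,
    (forall i, S (b i)) /\ a = \sum_(i < size s) b i * s`_i.

Definition fin_gen_right (S : A -> Prop) : Prop :=
  exists s : seq A, forall a : A, exists b : nat -> A,
    (forall i, S (b i)) /\ a = \sum_(i < size s) s`_i * b i.

(* I has finite k-codimension in S: the quotient S/I is spanned over k by the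
   classes of finitely many elements of S. *)
Definition finite_codim (S I : A -> Prop) : Prop :=
  exists s : seq A, (forall i, (i < size s)%N -> S s`_i) /\
    forall a, S a -> exists c : nat -> k,
      I (a - \sum_(i < size s) c i *: s`_i).

End Defs.

(* Main.v *)
Require Import Defs.
From HB Require Import structures.
From mathcomp Require Import all_boot all_order all_algebra.
From Stdlib Require Import Classical.
Set Implicit Arguments. Unset Strict Implicit.
Import GRing.Theory.
Local Open Scope ring_scope.

Section Span.
Variables (k : fieldType) (A : algType k) (I : A -> Prop).
Hypotheses (hI0 : I 0) (hIadd : forall x y, I x -> I y -> I (x + y))
  (hIsc : forall (c : k) x, I x -> I (c *: x)).

Definition span (s : seq A) (x : A) :=
  exists c : nat -> k, I (x - \sum_(i < size s) c i *: s`_i).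

Lemma span_nil x : span [::] x <-> I x.
Proof.
split; first by case=> c; rewrite big_ord0 subr0.
by move=> Ix; exists (fun _ => 0); rewrite big_ord0 subr0.
Qed.

Lemma span_cons a s x : span (a :: s) x <-> exists d, span s (x - d *: a).
Proof.
split.
  case=> c; rewrite /= big_ord_recl /= => H.
  exists (c 0%N); exists (fun i => c i.+1).
  by rewrite opprD addrA in H.
case=> d [c H]; exists (fun i => if i is j.+1 then c j else d).
by rewrite /= big_ord_recl /= opprD addrA.
Qed.

Lemma Iopp x : I x -> I (- x).
Proof. by move=> H; rewrite -scaleN1r; apply: hIsc. Qed.

Lemma span_add s x y : span s x -> span s y -> span s (x + y).
Proof.
case=> c Hc [d Hd]; exists (fun i => c i + d i).
have -> : \sum_(i < size s) (c i + d i) *: s`_i =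
  \sum_(i < size s) c i *: s`_i + \sum_(i < size s) d i *: s`_i.
  by rewrite -big_split; apply: eq_bigr => i _; rewrite scalerDl.
by rewrite opprD addrACA; apply: hIadd.
Qed.

Lemma span_scale s e x : span s x -> span s (e *: x).
Proof.
case=> c Hc; exists (fun i => e * c i).
have -> : \sum_(i < size s) (e * c i) *: s`_i = e *: \sum_(i < size s) c i *: s`_i.
  by rewrite scaler_sumr; apply: eq_bigr => i _; rewrite scalerA.
by rewrite -scalerBr; apply: hIsc.
Qed.

Lemma span_I s x y : span s x -> I (y - x) -> span s y.
Proof.
case=> c Hc Hy; exists c.
have -> : y - \sum_(i < size s) c i *: s`_i = (y - x) + (x - \sum_(i < size s) c i *: s`_i).
  by rewrite addrA addrNK.
by apply: hIadd.
Qed.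

Lemma span_0 s : span s 0.
Proof.
exists (fun _ => 0); rewrite big1 ?subr0 // => i _; by rewrite scale0r.
Qed.

Lemma span_cat u v x y : span u x -> span v y -> span (u ++ v) (x + y).
Proof.
elim: u x => [|a u IH] x /=.
  move=> /span_nil Ix Hy; rewrite addrC; apply: span_I Hy _.
  by rewrite [y + x]addrC addrK.
move=> /span_cons [d Hd] Hy; apply/span_cons; exists d.
have -> : x + y - d *: a = (x - d *: a) + y by rewrite addrAC.
exact: IH.
Qed.

Hypothesis hIr : forall x r, I x -> I (x * r).

Lemma span_mulr t b r : span t b -> span (map (fun x => x * r) t) (b * r).
Proof.
elim: t b => [|a t IH] b /=.
  by move=> /span_nil Ib; apply/span_nil; apply: hIr.
move=> /span_cons [d Hd]; apply/span_cons; exists d.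
have -> : b * r - d *: (a * r) = (b - d *: a) * r by rewrite mulrBl scalerAl.
exact: IH.
Qed.

End Span.

Lemma zmod_id0 (V : zmodType) (w X Y : V) : w - X - (- X + Y + (w - Y)) = 0.
Proof. by rewrite -[- X + Y + _]addrA [Y + _]addrC subrK addrC subrr. Qed.

Section SubFin.
Variables (k : fieldType) (A : algType k) (I : A -> Prop).
Hypotheses (hI0 : I 0) (hIadd : forall x y, I x -> I y -> I (x + y))
  (hIsc : forall (c : k) x, I x -> I (c *: x)).

Lemma sub_fin (s : seq A) : forall W : A -> Prop,
  W 0 -> (forall x y, W x -> W y -> W (x + y)) ->
  (forall (c : k) x, W x -> W (c *: x)) ->
  (forall w, W w -> span I s w) ->
  exists T : seq A, (forall i, (i < size T)%N -> W T`_i) /\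
    forall w, W w -> span I T w.
Proof.
elim: s => [|a s IH] W W0 Wadd Wsc Ws.
  by exists [::]; split => // w Ww; apply/span_nil => //; move/Ws: Ww => /span_nil; apply.
pose W' w := W w /\ span I s w.
have [T' [HT'1 HT'2]] : exists T : seq A, (forall i, (i < size T)%N -> W' T`_i) /\
    forall w, W' w -> span I T w.
  apply: IH.
  - by split => //; apply: span_0.
  - by move=> x y [? ?] [? ?]; split; [apply: Wadd | apply: span_add].
  - by move=> c x [? ?]; split; [apply: Wsc | apply: span_scale].
  - by move=> w [].
case: (classic (exists w0, W w0 /\ ~ span I s w0)) => [[w0 [Ww0 Nw0]]|Hno].
  exists (w0 :: T'); split.
    by case=> [|i] //= Hi; case: (HT'1 i Hi).
  move=> w Ww.
  have [d Hd] := (@span_cons _ _ I a s w).1 (Ws w Ww).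
  have [c0 Hc0] := (@span_cons _ _ I a s w0).1 (Ws w0 Ww0).
  have c0n : c0 != 0.
    apply/eqP => E; apply: Nw0; move: Hc0; by rewrite E scale0r subr0.
  apply/span_cons => //; exists (d / c0); apply: HT'2; split.
    by rewrite -scaleNr; apply: Wadd => //; apply: Wsc.
  apply: (span_I hIadd) (span_add hIadd (span_scale hIsc (- (d / c0)) Hc0) Hd) _.
  rewrite scalerBr scalerA mulNr divfK // scaleNr.
  rewrite ?opprK ?scaleNr ?opprK zmod_id0; exact: hI0.
exists T'; split; first by move=> i /HT'1 [].
move=> w Ww; apply: HT'2; split => //.
by apply: NNPP => Hn; apply: Hno; exists w.
Qed.

End SubFin.

Fixpoint Useq (k : fieldType) (A : algType k) (t s : seq A) (n : nat) : seq A :=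
  if n is m.+1 then Useq t s m ++ map (fun x => x * s`_m) t else [::].

Theorem lemma4p1 (k : fieldType) (A : algType k) (A0 : A -> Prop)
  (hA0 : is_subalgebra A0)
  (hleft : fin_gen_left A0) (hright : fin_gen_right A0)
  (I : A -> Prop) (hI : is_two_sided_ideal_in (fun _ => True) I) :
  finite_codim (fun _ => True) I <->
  exists I0 : A -> Prop,
    [/\ is_two_sided_ideal_in A0 I0, finite_codim A0 I0 &
        (forall x, I0 x -> I x)].
Proof.
case: hI => _ I0' Iadd Il Ir.
have Isc : forall (c : k) x, I x -> I (c *: x).
  by move=> c x Ix; rewrite -[x]mul1r scalerAl; apply: Il.
case: hA0 => A1 Aadd Asc Amul.
have A00 : A0 0 by rewrite -(scale0r 1); apply: Asc.
split.
  case=> s [_ Hs].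
  have [T [HT1 HT2]] := sub_fin I0' Iadd Isc A00 Aadd Asc (fun w _ => Hs w Logic.I).
  exists (fun x => A0 x /\ I x); split.
  - split.
    + by move=> x [].
    + by [].
    + by move=> x y [? ?] [? ?]; split; [apply: Aadd | apply: Iadd].
    + by move=> a x Aa [Ax Ix]; split; [apply: Amul | apply: Il].
    + by move=> a x Aa [Ax Ix]; split; [apply: Amul | apply: Ir].
  - exists T; split => // a Aa; case: (HT2 a Aa) => c Hc; exists c; split => //.
    apply: (Aadd) => //; rewrite -scaleN1r; apply: (Asc).
    apply: (big_ind A0) => // i _; apply: (Asc); apply: HT1; exact: ltn_ord.
  - by move=> x [].
case=> I0 [[I0A I00 _ _ I0r] [t [Ht Hcod]] I0I].
case: hleft => s Hs.
have key : forall n (b : nat -> A), (forall i, A0 (b i)) ->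
    span I (Useq t s n) (\sum_(i < n) b i * s`_i).
  elim=> [|n IH] b Hb /=.
    by rewrite big_ord0; apply/span_nil.
  rewrite big_ord_recr /=; apply: span_cat => //; first exact: IH.
  have Ir2 : forall x r, I x -> I (x * r) by move=> x r Ix; apply: Ir.
  apply: span_mulr => //; case: (Hcod (b n) (Hb n)) => c Hc; exists c.
  exact: I0I.
exists (Useq t s (size s)); split => // a _.
case: (Hs a) => b [Hb ->]; exact: key.
Qed.
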